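(* Let $G=\{1,\dots,n\}$ be a set of generating units with marginal costs $C_1<\dots<C_n$, capacities $\overline P_g\ge 0$, up/down balancing costs $C^{\mathrm u}_g, C^{\mathrm d}_g\in\mathbb{R}$ and balancing limits $R^{\mathrm u}_g,R^{\mathrm d}_g\ge 0$. Let $B$ be a finite set of nodes, $\Lambda$ a finite set of lines with origin $o(l)\in B$, end $e(l)\in B$ and capacity $\overline F_l\ge0$, $G(b)\subseteq G$ the units at node $b$ (the sets $G(b)$ partitioning $G$), and $D(b)$ the loads at node $b$. Let data $\{(\mathbf x_i,(L_{di})_{d})\}_{i=1}^N$ be given with $\mathbf x_i\in\mathbb{R}^p$ and $L_{di}\in\mathbb{R}$. For each $i$ and $\widehat L\in\mathbb R$ define the realized-cost set $T_i(p)$ as the set of $(r^{\mathrm u},r^{\mathrm d},f)\in\mathbb R^n_{\ge0}\times\mathbb R^n_{\ge0}\times\mathbb R^{\Lambda}$ with $0\le p_g+r^{\mathrm u}_g-r^{\mathrm d}_g\le\overline P_g$, $r^{\mathrm u}_g\le R^{\mathrm u}_g$, $r^{\mathrm d}_g\le R^{\mathrm d}_g$ for all $g$, $\sum_{g\in G(b)}(p_g+r^{\mathrm u}_g-r^{\mathrm d}_g)=\sum_{d\in D(b)}L_{di}+\sum_{l:o(l)=b}f_l-\sum_{l:e(l)=b}f_l$ for all $b\in B$, and $|f_l|\le\overline F_l$ for all $l$. (Bilevel problem) Minimize over $\mathbf q\in\mathbb R^p$ and $(p_{\cdot i},r^{\mathrm u}_{\cdot i},r^{\mathrm d}_{\cdot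 i},f_{\cdot i})_{i=1}^N$ the objective $\frac1N\sum_{i=1}^N\sum_{g}(C_gp_{gi}+C^{\mathrm u}_gr^{\mathrm u}_{gi}-C^{\mathrm d}_gr^{\mathrm d}_{gi})$ subject to $(r^{\mathrm u}_{\cdot i},r^{\mathrm d}_{\cdot i},f_{\cdot i})\in T_i(p_{\cdot i})$ and $p_{\cdot i}\in\arg\min\{\sum_gC_gp_g:\sum_gp_g=\mathbf q^\top\mathbf x_i,\ 0\le p_g\le\overline P_g\ \forall g\}$ for all $i$. (Single-level MILP) Minimize the same objective over the same variables together with $u_{gi}\in\{0,1\}$, subject to $(r^{\mathrm u}_{\cdot i},r^{\mathrm d}_{\cdot i},f_{\cdot i})\in T_i(p_{\cdot i})$, $\sum_g p_{gi}=\mathbf q^\top\mathbf x_i$, $u_{1i}\overline P_1\le p_{1i}\le\overline P_1$, $u_{gi}\overline P_g\le p_{gi}\le u_{(g-1)i}\overline P_g$ and $u_{gi}\le u_{(g-1)i}$ for $g\ge2$, for all $i$. Then the feasible set of the bilevel problem equals the projection of the feasible set of the MILP onto the variables $(\mathbf q,p,r^{\mathrm u},r^{\mathrm d},f)$; consequently both problems have the same optimal value, and a vector $\mathbf q$ (together with the remaining variables) is optimal for the bilevel problem if and only if it is (the projection of) an optimal solution of the MILP.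
   Context: This is the training problem for an affine ''prescription'' $\widehat L=\mathbf q^\top\mathbf x$ of total system net demand used in a two-stage power scheduling: the forward stage dispatches units by cost-merit order to meet $\widehat L$, and the real-time stage adjusts production by up-regulation $r^{\mathrm u}$ and down-regulation $r^{\mathrm d}$ to meet the realized nodal net loads $L_{di}$ over a transport (pipeline) network with line flows $f_l$. Strictly ordered marginal costs $C_1<\dots<C_n$ are assumed so that the forward dispatch problem has a unique optimal solution whenever feasible. *)

(* Defs.v *)
From HB Require Import structures.
From mathcomp Require Import all_boot all_order all_algebra.
From mathcomp Require Import classical_sets reals constructive_ereal ereal.
Set Implicit Arguments. Unset Strict Implicit. Unset Printing Implicit Defensive.
Import Order.TTheory GRing.Theory Num.Theory.
Local Open Scope ring_scope.
Local Open Scope classical_set_scope.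

Section Model.
Variable R : realType.
(* n units 'I_n (unit g has index val g; unit "1" of the paper is index 0),
   N data points 'I_N, feature dimension p. *)
Variables (n N p : nat).
Variables (B Lam D : finType).
Variables (C Cu Cd Pbar Ru Rd : 'I_n -> R).
Variables (o e : Lam -> B) (Fbar : Lam -> R).
(* node of each unit (G(b) = [g | loc g == b]) and of each load (D(b)) *)
Variables (loc : 'I_n -> B) (dloc : D -> B).
Variables (x : 'I_N -> 'I_p -> R) (L : 'I_N -> D -> R).

Definition prescription (q : 'I_p -> R) (i : 'I_N) : R := \sum_(k < p) q k * x i k.

Definition inT (i : 'I_N) (pv : 'I_n -> R) (ru rd : 'I_n -> R) (f : Lam -> R) : Prop :=
  (forall g : 'I_n, [/\ 0 <= ru g, 0 <= rd g,
       0 <= pv g + ru g - rd g <= Pbar g, ru g <= Ru g & rd g <= Rd g]) /\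
  (forall b : B,
     \sum_(g < n | loc g == b) (pv g + ru g - rd g) =
     \sum_(d | dloc d == b) L i d + \sum_(l | o l == b) f l - \sum_(l | e l == b) f l) /\
  (forall l : Lam, `|f l| <= Fbar l).

Definition dispatch_feasible (Lhat : R) (pv : 'I_n -> R) : Prop :=
  \sum_(g < n) pv g = Lhat /\ (forall g : 'I_n, 0 <= pv g <= Pbar g).

Definition dispatch_argmin (Lhat : R) (pv : 'I_n -> R) : Prop :=
  dispatch_feasible Lhat pv /\
  (forall pv' : 'I_n -> R, dispatch_feasible Lhat pv' ->
     \sum_(g < n) C g * pv g <= \sum_(g < n) C g * pv' g).

Definition objective (P RU RD : 'I_N -> 'I_n -> R) : R :=
  (N%:R)^-1 * \sum_(i < N) \sum_(g < n) (C g * P i g + Cu g * RU i g - Cd g * RD i g).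

Definition bilevel_feasible (q : 'I_p -> R) (P RU RD : 'I_N -> 'I_n -> R)
    (F : 'I_N -> Lam -> R) : Prop :=
  forall i : 'I_N, inT i (P i) (RU i) (RD i) (F i) /\ dispatch_argmin (prescription q i) (P i).

Definition milp_feasible (q : 'I_p -> R) (P RU RD : 'I_N -> 'I_n -> R)
    (F : 'I_N -> Lam -> R) (U : 'I_N -> 'I_n -> R) : Prop :=
  forall i : 'I_N,
    [/\ inT i (P i) (RU i) (RD i) (F i),
        \sum_(g < n) P i g = prescription q i,
        (forall g : 'I_n, U i g = 0 \/ U i g = 1),
        (forall g : 'I_n, val g = 0%N -> U i g * Pbar g <= P i g <= Pbar g) &
        (forall g h : 'I_n, val h = (val g).+1 ->
           U i h * Pbar h <= P i h <= U i g * Pbar h /\ U i h <= U i g)].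

Definition bilevel_optimal q P RU RD F : Prop :=
  bilevel_feasible q P RU RD F /\
  (forall q' P' RU' RD' F', bilevel_feasible q' P' RU' RD' F' ->
     objective P RU RD <= objective P' RU' RD').

Definition milp_optimal q P RU RD F U : Prop :=
  milp_feasible q P RU RD F U /\
  (forall q' P' RU' RD' F' U', milp_feasible q' P' RU' RD' F' U' ->
     objective P RU RD <= objective P' RU' RD').

(* optimal values (infima, in the extended reals; +oo if infeasible) *)
Definition bilevel_value : \bar R :=
  ereal_inf [set v | exists q P RU RD F,
    bilevel_feasible q P RU RD F /\ v = (objective P RU RD)%:E].

Definition milp_value : \bar R :=
  ereal_inf [set v | exists q P RU RD F U,
    milp_feasible q P RU RD F U /\ v = (objective P RU RD)%:E].

End Model.

(* Main.v *)
Require Import Defs.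
From HB Require Import structures.
From mathcomp Require Import all_boot all_order all_algebra.
From mathcomp Require Import classical_sets reals constructive_ereal ereal.
From mathcomp Require Import lra.
Import Order.TTheory GRing.Theory Num.Theory.
Local Open Scope ring_scope.

Section Disp.
Variables (R : realType) (n : nat) (C Pbar : 'I_n -> R).

Definition mono (pv : 'I_n -> R) :=
  forall j h : 'I_n, (val j < val h)%N -> pv j < Pbar j -> pv h = 0.

Lemma sum_delta (F : 'I_n -> R) j : \sum_(g < n) F g * (g == j)%:R = F j.
Proof.
rewrite (bigD1 j) //= eqxx mulr1 big1 ?addr0 // => i /negbTE ->; by rewrite mulr0.
Qed.

Lemma mono_argmin Lhat pv :
  (forall g h : 'I_n, (val g < val h)%N -> C g < C h) ->
  dispatch_feasible Pbar Lhat pv -> mono pv -> dispatch_argmin C Pbar Lhat pv.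
Proof.
move=> HC [s b] Hm; split=> // pv' [s' b'].
pose d := fun g => pv g - pv' g.
have sd : \sum_(g < n) d g = 0 by rewrite /d sumrB s s' subrr.
suff : \sum_(g < n) C g * d g <= 0.
  rewrite /d (eq_bigr (fun g => C g * pv g - C g * pv' g)) ?sumrB ?subr_le0 //.
  by move=> g _; rewrite mulrBr.
case: (boolP [exists j, pv j < Pbar j]) => [/existsP [j0 Hj0]|/existsPn Hn].
- case: (@arg_minnP _ j0 (fun j => pv j < Pbar j) (fun j => val j) Hj0) => k Hk Hmin.
  apply: (@le_trans _ _ (\sum_(g < n) C k * d g)); last by rewrite -mulr_sumr sd mulr0.
  apply: ler_sum => g _.
  have /andP [b1 b2] := b g; have /andP [b1' b2'] := b' g.
  case: (ltngtP (val g) (val k)) => Hgk.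
  + have Cle : C g <= C k by apply/ltW/HC.
    have E : pv g = Pbar g.
      apply/eqP; rewrite eq_le b2 /= leNgt; apply/negP => H.
      by have := Hmin g H; rewrite leqNgt Hgk.
    rewrite /d E; nra.
  + have Cle : C k <= C g by apply/ltW/HC.
    rewrite /d (Hm k g Hgk Hk); nra.
  + have -> : g = k by apply: val_inj.
    by [].
- have d0 : forall g, 0 <= d g.
    move=> g; have := Hn g; rewrite -leNgt => H; have /andP [_ h] := b' g.
    rewrite /d subr_ge0; exact: le_trans h H.
  have Z := psumr_eq0P (fun g _ => d0 g) sd.
  by rewrite big1 // => g _; rewrite (Z g) // mulr0.
Qed.

Lemma argmin_mono Lhat pv :
  (forall g h : 'I_n, (val g < val h)%N -> C g < C h) ->
  dispatch_argmin C Pbar Lhat pv -> mono pv.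
Proof.
move=> HC [[s b] Hopt] j h jh Hj; apply/eqP.
have /andP [bh1 bh2] := b h.
rewrite eq_le bh1 andbT leNgt; apply/negP => Hh.
pose eps := Num.min (Pbar j - pv j) (pv h).
have e0 : 0 < eps by rewrite lt_min subr_gt0 Hj Hh.
have e1 : eps <= Pbar j - pv j by rewrite /eps ge_min lexx.
have e2 : eps <= pv h by rewrite /eps ge_min lexx orbT.
pose pv' := fun g => pv g + eps * (g == j)%:R - eps * (g == h)%:R.
have hj : h != j by apply/eqP => E; move: jh; rewrite E ltnn.
have bd : forall g, 0 <= pv' g <= Pbar g.
  move=> g; rewrite /pv' /=.
  have [->|gj] := eqVneq g j.
    rewrite eq_sym (negbTE hj) mulr1 mulr0 subr0.
    have /andP [b1 b2] := b j; apply/andP; split; lra.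
  rewrite ?(negbTE gj) mulr0 addr0.
  have [->|gh] := eqVneq g h.
    rewrite mulr1; apply/andP; split; lra.
  rewrite ?(negbTE gh) mulr0 subr0; exact: b g.
have sp : \sum_(g < n) pv' g = Lhat.
  rewrite /pv' sumrB big_split /=.
  rewrite (sum_delta (fun _ => eps) j) (sum_delta (fun _ => eps) h) s; lra.
have := Hopt pv' (conj sp bd).
have -> : \sum_(g < n) C g * pv' g =
   \sum_(g < n) C g * pv g + C j * eps - C h * eps.
  rewrite (eq_bigr (fun g => C g * pv g + (C g * eps) * (g == j)%:R
                               - (C g * eps) * (g == h)%:R)).
    by rewrite sumrB big_split /= (sum_delta (fun g => C g * eps) j)
               (sum_delta (fun g => C g * eps) h).
  by move=> g _; rewrite /pv' mulrBr mulrDr !mulrA.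
have := HC j h jh; nra.
Qed.

Definition Ufun (pv : 'I_n -> R) (g : 'I_n) : R :=
  if [forall k : 'I_n, (val k <= val g)%N ==> (pv k == Pbar k)] then 1 else 0.

Lemma mono_U pv :
  (forall g, 0 <= pv g <= Pbar g) -> mono pv ->
  [/\ (forall g, Ufun pv g = 0 \/ Ufun pv g = 1),
      (forall g : 'I_n, val g = 0%N -> Ufun pv g * Pbar g <= pv g <= Pbar g) &
      (forall g h : 'I_n, val h = (val g).+1 ->
         Ufun pv h * Pbar h <= pv h <= Ufun pv g * Pbar h /\ Ufun pv h <= Ufun pv g)].
Proof.
move=> b Hm.
have low : forall g, Ufun pv g * Pbar g <= pv g.
  move=> g; rewrite /Ufun; case: ifP => [/forallP H|_].
    by rewrite mul1r; move/implyP: (H g) => /(_ (leqnn _)) /eqP ->.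
  by rewrite mul0r; exact: (andP (b g)).1.
split.
- by move=> g; rewrite /Ufun; case: ifP; auto.
- by move=> g _; rewrite low; exact: (andP (b g)).2.
- move=> g h hg; split.
    rewrite low /=; rewrite /Ufun; case: ifP => [_|/negbT].
      by rewrite mul1r; exact: (andP (b h)).2.
    rewrite negb_forall => /existsP [k]; rewrite negb_imply => /andP [kg kne].
    have kl : pv k < Pbar k by rewrite lt_neqAle kne (andP (b k)).2.
    by rewrite (Hm k h _ kl) ?mul0r // hg ltnS.
  rewrite /Ufun; case: ifP => [/forallP H|_]; last by case: ifP => _; rewrite ?ler01.
  rewrite ifT //; apply/forallP => k; apply/implyP => kg; apply: (implyP (H k)).
  by rewrite hg; exact: leqW.
Qed.

Lemma predord (h : 'I_n) : (0 < val h)%N -> exists g : 'I_n, val h = (val g).+1.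
Proof.
move=> hp.
have lt : ((val h).-1 < n)%N by apply: leq_ltn_trans (leq_pred _) (ltn_ord h).
by exists (Ordinal lt) => /=; rewrite prednK.
Qed.

Lemma U_mono pv U :
  (forall g, 0 <= Pbar g) ->
  (forall g, U g = 0 \/ U g = 1) ->
  (forall g : 'I_n, val g = 0%N -> U g * Pbar g <= pv g <= Pbar g) ->
  (forall g h : 'I_n, val h = (val g).+1 ->
         U h * Pbar h <= pv h <= U g * Pbar h /\ U h <= U g) ->
  (forall g, 0 <= pv g <= Pbar g) /\ mono pv.
Proof.
move=> HP HU H0 Hs.
have low : forall g, U g * Pbar g <= pv g.
  move=> g; case: (posnP (val g)) => [g0|gp].
    by have /andP [] := H0 g g0.
  have [g' E] := predord _ gp; by have [/andP [] ] := Hs g' g E.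
have bd : forall g, 0 <= pv g <= Pbar g.
  move=> g; have hP := HP g; have lg := low g.
  case: (posnP (val g)) => [g0|gp].
    have /andP [_ u] := H0 g g0.
    by case: (HU g) lg => -> lg; rewrite ?mul0r ?mul1r in lg; apply/andP; split; lra.
  have [g' E] := predord _ gp; have [/andP [_ u] _] := Hs g' g E.
  by case: (HU g) lg => -> lg; case: (HU g') u => -> u;
     rewrite ?mul0r ?mul1r in lg u; apply/andP; split; lra.
split=> // j h jh Hj.
have Uj : U j = 0.
  have lj := low j; case: (HU j) lj => // -> lj; rewrite mul1r in lj; lra.
have Z : forall d (m : 'I_n), val m = (val j + d)%N -> U m = 0.
  elim=> [|d IH] m Em.
    by have -> : m = j by apply: val_inj; rewrite Em addn0.
  have lt : (val j + d < n)%N.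
    by apply: leq_ltn_trans _ (ltn_ord m); rewrite Em addnS leqnSn.
  have E2 : val m = (val (Ordinal lt)).+1 by rewrite Em addnS.
  have [_ Hle] := Hs (Ordinal lt) m E2.
  rewrite (IH (Ordinal lt) erefl) in Hle.
  by case: (HU m) => E //; rewrite E in Hle; lra.
have hp : (0 < val h)%N by apply: leq_ltn_trans jh.
have [hq E] := predord _ hp.
have Uq : U hq = 0.
  apply: (Z (val hq - val j)%N); rewrite subnKC //.
  by move: jh; rewrite E ltnS.
have [/andP [_ u] _] := Hs hq h E.
rewrite Uq mul0r in u; have /andP [b1 _] := bd h; lra.
Qed.

End Disp.
Arguments Ufun {R n} Pbar pv g.
Arguments mono_argmin {R n C Pbar Lhat pv}.
Arguments argmin_mono {R n C Pbar Lhat pv}.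
Arguments mono_U {R n Pbar pv}.
Arguments U_mono {R n Pbar pv U}.

Theorem mainTheorem2 (R : realType) (n N p : nat) (B Lam D : finType)
  (C Cu Cd Pbar Ru Rd : 'I_n -> R) (o e : Lam -> B) (Fbar : Lam -> R)
  (loc : 'I_n -> B) (dloc : D -> B)
  (x : 'I_N -> 'I_p -> R) (L : 'I_N -> D -> R) :
  (forall g h : 'I_n, (val g < val h)%N -> C g < C h) ->
  (forall g, 0 <= Pbar g) -> (forall g, 0 <= Ru g) -> (forall g, 0 <= Rd g) ->
  (forall l, 0 <= Fbar l) ->
  (forall q P RU RD F,
     bilevel_feasible C Pbar Ru Rd o e Fbar loc dloc x L q P RU RD F <->
     exists U, milp_feasible Pbar Ru Rd o e Fbar loc dloc x L q P RU RD F U) /\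
  bilevel_value C Cu Cd Pbar Ru Rd o e Fbar loc dloc x L =
    milp_value C Cu Cd Pbar Ru Rd o e Fbar loc dloc x L /\
  (forall q P RU RD F,
     bilevel_optimal C Cu Cd Pbar Ru Rd o e Fbar loc dloc x L q P RU RD F <->
     exists U, milp_optimal C Cu Cd Pbar Ru Rd o e Fbar loc dloc x L q P RU RD F U).
Proof.
move=> HC HP _ _ _.
have P1 : forall q P RU RD F,
     bilevel_feasible C Pbar Ru Rd o e Fbar loc dloc x L q P RU RD F <->
     exists U, milp_feasible Pbar Ru Rd o e Fbar loc dloc x L q P RU RD F U.
  move=> q P RU RD F; split.
    move=> H; exists (fun i => Ufun Pbar (P i)) => i.
    have [HT Ha] := H i.
    have Hm := argmin_mono HC Ha.
    have [[s b] _] := Ha.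
    have [U1 U2 U3] := mono_U b Hm.
    by split.
  move=> [U H] i; have [HT s HU H0 Hs] := H i.
  have [b Hm] := U_mono HP HU H0 Hs.
  split=> //; exact: mono_argmin HC (conj s b) Hm.
split=> //; split.
  rewrite /bilevel_value /milp_value; congr ereal_inf.
  apply/seteqP; split=> v /=.
    move=> [q [P [RU [RD [F [H ->]]]]]].
    have [U HU] := (P1 q P RU RD F).1 H.
    by exists q, P, RU, RD, F, U.
  move=> [q [P [RU [RD [F [U [H ->]]]]]]].
  exists q, P, RU, RD, F; split=> //; apply/P1; by exists U.
move=> q P RU RD F; split.
  move=> [H Ho]; have [U HU] := (P1 q P RU RD F).1 H.
  exists U; split=> // q' P' RU' RD' F' U' H'.
  apply: Ho; apply/P1; by exists U'.
move=> [U [H Ho]]; split; first by apply/P1; exists U.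
move=> q' P' RU' RD' F' H'; have [U' HU'] := (P1 q' P' RU' RD' F').1 H'.
exact: Ho HU'.
Qed.
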